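(* Let $p_1=2,p_2,p_3,\dots$ be the consecutive primes, let $\chi$ be any Dirichlet character, and let $n\ge31$ (so $p_n\ge127$). Then $$B_\chi=R_1\,A\,L(2,\chi)L(3,\chi)L(4,\chi)\prod_{k=1}^{n}\Bigl(1+\frac{\chi(p_k)}{p_k(p_k^2-p_k-1)}\Bigr)\Bigl(1-\frac{\chi(p_k)}{p_k^3}\Bigr)\Bigl(1-\frac{\chi(p_k)}{p_k^4}\Bigr)$$ for a complex number $R_1$ satisfying $$\frac{1}{1+p_{n+1}^{-3.85}}\le|R_1|\le1+\frac{1}{p_{n+1}^{3.85}}.$$
   Context: $A=\prod_p\bigl(1-\frac{1}{p(p-1)}\bigr)$ (Artin's constant, product over primes). For a Dirichlet character $\chi$, $L(s,\chi)=\sum_{n\ge1}\chi(n)n^{-s}$ and $B_\chi=\prod_p\Bigl(1+\frac{(\chi(p)-1)p}{(p^2-\chi(p))(p-1)}\Bigr)$, the product over all primes $p$. *)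

(* Defs.v *)
From Stdlib Require Import Reals ZArith Znumtheory Arith.
From Coquelicot Require Export Coquelicot.
Open Scope R_scope.

Definition is_prime (p : nat) : Prop := Znumtheory.prime (Z.of_nat p).

Definition dirichlet_character (q : nat) (chi : nat -> C) : Prop :=
  (1 <= q)%nat /\
  chi 1%nat = RtoC 1 /\
  (forall m n : nat, chi (m * n)%nat = Cmult (chi m) (chi n)) /\
  (forall n : nat, chi (n + q)%nat = chi n) /\
  (forall n : nat, chi n <> RtoC 0 <-> Nat.gcd n q = 1%nat).

Definition consecutive_primes (pr : nat -> nat) : Prop :=
  pr 1%nat = 2%nat /\
  (forall k, (1 <= k)%nat -> is_prime (pr k)) /\
  (forall k, (1 <= k)%nat -> (pr k < pr (S k))%nat) /\
  (forall p, is_prime p -> exists k, (1 <= k)%nat /\ pr k = p).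

Definition Clim (u : nat -> C) : C :=
  @lim (CompleteNormedModule.CompleteSpace C_AbsRing C_CompleteNormedModule)
    (filtermap u eventually).

Fixpoint prod_primes_below (f : nat -> C) (N : nat) : C :=
  match N with
  | O => RtoC 1
  | S m => Cmult (prod_primes_below f m)
             (if prime_dec (Z.of_nat m) then f m else RtoC 1)
  end.

Definition prod_over_primes (f : nat -> C) : C :=
  Clim (prod_primes_below f).

Fixpoint prod_1_to (g : nat -> C) (n : nat) : C :=
  match n with
  | O => RtoC 1
  | S m => Cmult (prod_1_to g m) (g (S m))
  end.

Fixpoint sum_1_to (g : nat -> C) (n : nat) : C :=
  match n with
  | O => RtoC 0
  | S m => Cplus (sum_1_to g m) (g (S m))
  end.

Definition artinA : C :=
  prod_over_primes (fun p => RtoC (1 - / (INR p * (INR p - 1)))).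

Definition Lfun (s : nat) (chi : nat -> C) : C :=
  Clim (sum_1_to (fun k => Cdiv (chi k) (RtoC (INR k ^ s)))).

Definition Bchi (chi : nat -> C) : C :=
  prod_over_primes (fun p =>
    Cplus (RtoC 1)
      (Cdiv (Cmult (Cminus (chi p) (RtoC 1)) (RtoC (INR p)))
            (Cmult (Cminus (RtoC (INR p ^ 2)) (chi p)) (RtoC (INR p - 1))))).

Definition local_factor (chi : nat -> C) (p : nat) : C :=
  Cmult (Cmult
    (Cplus (RtoC 1) (Cdiv (chi p) (RtoC (INR p * (INR p ^ 2 - INR p - 1)))))
    (Cminus (RtoC 1) (Cdiv (chi p) (RtoC (INR p ^ 3)))))
    (Cminus (RtoC 1) (Cdiv (chi p) (RtoC (INR p ^ 4)))).

(* Main.v *)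
Require Import Defs.
From Stdlib Require Import Reals Lra Lia Psatz ZArith Znumtheory Arith.
From Coquelicot Require Import Coquelicot.
Open Scope R_scope.

Definition Ccvg (u : nat -> C) (l : C) : Prop :=
  forall eps, 0 < eps -> exists N, forall n, (N <= n)%nat -> Cmod (Cminus (u n) l) < eps.

Definition CCauchy (u : nat -> C) : Prop :=
  forall eps, 0 < eps -> exists N, forall m n, (N <= m)%nat -> (N <= n)%nat ->
     Cmod (Cminus (u m) (u n)) < eps.

Lemma Cmod_minus_sym (a b : C) : Cmod (Cminus a b) = Cmod (Cminus b a).
Proof.
  replace (Cminus a b) with (Copp (Cminus b a)) by (apply injective_projections; simpl; ring).
  unfold Cmod; simpl. f_equal. ring.
Qed.

Lemma Cmod_tri3 (a b c : C) : Cmod (Cminus a c) <= Cmod (Cminus a b) + Cmod (Cminus b c).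
Proof.
  replace (Cminus a c) with (Cplus (Cminus a b) (Cminus b c)) by
    (apply injective_projections; simpl; ring).
  apply Cmod_triangle.
Qed.

Lemma CCauchy_lim (u : nat -> C) : CCauchy u -> Ccvg u (Clim u).
Proof.
  intros Hc.
  set (F := filtermap u eventually).
  assert (PF : ProperFilter F).
  { apply filtermap_proper_filter. apply eventually_filter. }
  assert (HF : @cauchy (CompleteNormedModule.CompleteSpace C_AbsRing C_CompleteNormedModule) F).
  { intros eps.
    destruct (Hc (eps / 2)) as [N HN]. destruct eps; simpl; lra.
    exists (u N). exists N. intros n Hn.
    apply (@norm_compat1 C_AbsRing C_NormedModule). change (Cmod (Cminus (u n) (u N)) < eps).
    specialize (HN n N Hn (le_n _)). destruct eps; simpl in *. lra. }
  intros eps Heps.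
  assert (Hpos : 0 < eps / (2 * @norm_factor C_AbsRing C_NormedModule)).
  { apply Rdiv_lt_0_compat. lra. pose proof (@norm_factor_gt_0 C_AbsRing C_NormedModule). lra. }
  pose proof (@complete_cauchy (CompleteNormedModule.CompleteSpace C_AbsRing C_CompleteNormedModule) F PF HF (mkposreal _ Hpos)) as H.
  destruct H as [N HN]. exists N. intros n Hn. specialize (HN n Hn).
  apply (@norm_compat2 C_AbsRing C_NormedModule (@lim (CompleteNormedModule.CompleteSpace C_AbsRing C_CompleteNormedModule) F) (u n) (mkposreal _ Hpos)) in HN. simpl in HN.
  change (Cmod (Cminus (u n) (Clim u)) < @norm_factor C_AbsRing C_NormedModule * (eps / (2 * @norm_factor C_AbsRing C_NormedModule))) in HN.
  pose proof (@norm_factor_gt_0 C_AbsRing C_NormedModule).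
  replace (@norm_factor C_AbsRing C_NormedModule * (eps / (2 * @norm_factor C_AbsRing C_NormedModule))) with (eps/2) in HN by (field; lra).
  lra.
Qed.

Lemma Ccvg_Cauchy u l : Ccvg u l -> CCauchy u.
Proof.
  intros H eps He. destruct (H (eps/2)) as [N HN]. lra.
  exists N. intros m n Hm Hn. pose proof (Cmod_tri3 (u m) l (u n)).
  rewrite (Cmod_minus_sym l) in H0. pose proof (HN m Hm).
  pose proof (HN n Hn). lra.
Qed.

Lemma Cmod_zero_eq (a b : C) : (forall e, 0 < e -> Cmod (Cminus a b) < e) -> a = b.
Proof.
  intros H. destruct (Req_dec (Cmod (Cminus a b)) 0) as [E|E].
  - apply Cmod_eq_0 in E. apply injective_projections; injection E; simpl; intros; lra.
  - pose proof (Cmod_ge_0 (Cminus a b)). specialize (H (Cmod (Cminus a b)) ltac:(lra)). lra.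
Qed.

Lemma Ccvg_unique u l l' : Ccvg u l -> Ccvg u l' -> l = l'.
Proof.
  intros H1 H2. apply Cmod_zero_eq. intros e He.
  destruct (H1 (e/2)) as [N1 HN1]. lra. destruct (H2 (e/2)) as [N2 HN2]. lra.
  pose proof (HN1 (N1+N2)%nat ltac:(lia)) as A1. pose proof (HN2 (N1+N2)%nat ltac:(lia)) as A2.
  pose proof (Cmod_tri3 l (u (N1+N2)%nat) l') as A3. rewrite (Cmod_minus_sym l (u _)) in A3. lra.
Qed.

Lemma Ccvg_Clim u l : Ccvg u l -> Clim u = l.
Proof.
  intros H. apply (Ccvg_unique u). apply CCauchy_lim. eapply Ccvg_Cauchy; eauto. auto.
Qed.

Lemma Ccvg_ext u v l N0 : (forall n, (N0 <= n)%nat -> u n = v n) -> Ccvg u l -> Ccvg v l.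
Proof.
  intros E H eps He. destruct (H eps He) as [N HN]. exists (N + N0)%nat.
  intros n Hn. rewrite <- E by lia. apply HN; lia.
Qed.

Lemma Cmod_rev_tri (a b : C) : Cmod a <= Cmod b + Cmod (Cminus a b).
Proof.
  replace a with (Cplus b (Cminus a b)) at 1 by (apply injective_projections; simpl; ring).
  apply Cmod_triangle.
Qed.

Lemma Cmod_mult_diff (a b c d : C) :
  Cmod (Cminus (Cmult a b) (Cmult c d)) <= Cmod a * Cmod (Cminus b d) + Cmod d * Cmod (Cminus a c).
Proof.
  replace (Cminus (Cmult a b) (Cmult c d)) with
    (Cplus (Cmult a (Cminus b d)) (Cmult d (Cminus a c))) by
    (apply injective_projections; simpl; ring).
  eapply Rle_trans. apply Cmod_triangle. rewrite !Cmod_mult. lra.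
Qed.

Lemma Ccvg_mult u v a b : Ccvg u a -> Ccvg v b -> Ccvg (fun n => Cmult (u n) (v n)) (Cmult a b).
Proof.
  intros Hu Hv eps He.
  set (K := Cmod a + 1 + Cmod b).
  assert (HK : 0 < K) by (unfold K; pose proof (Cmod_ge_0 a); pose proof (Cmod_ge_0 b); lra).
  destruct (Hu (Rmin 1 (eps / (2*K)))) as [N1 H1].
  { apply Rmin_pos. lra. apply Rdiv_lt_0_compat; lra. }
  destruct (Hv (eps / (2*K))) as [N2 H2]. apply Rdiv_lt_0_compat; lra.
  exists (N1 + N2)%nat. intros n Hn.
  specialize (H1 n ltac:(lia)). specialize (H2 n ltac:(lia)).
  pose proof (Cmod_mult_diff (u n) (v n) a b).
  pose proof (Cmod_rev_tri (u n) a).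
  pose proof (Rmin_l 1 (eps/(2*K))). pose proof (Rmin_r 1 (eps/(2*K))).
  pose proof (Cmod_ge_0 a). pose proof (Cmod_ge_0 b). pose proof (Cmod_ge_0 (u n)).
  pose proof (Cmod_ge_0 (Cminus (v n) b)). pose proof (Cmod_ge_0 (Cminus (u n) a)).
  assert (Cmod (u n) <= Cmod a + 1) by lra.
  assert (Cmod (u n) * Cmod (Cminus (v n) b) <= (Cmod a + 1) * (eps / (2*K))) by
    (apply Rmult_le_compat; lra).
  assert (Cmod b * Cmod (Cminus (u n) a) <= Cmod b * (eps / (2*K))) by
    (apply Rmult_le_compat_l; lra).
  assert ((Cmod a + 1) * (eps / (2*K)) + Cmod b * (eps / (2*K)) = eps / 2)
    by (unfold K; field; lra).
  lra.
Qed.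

Fixpoint pall (f : nat -> C) (N : nat) : C :=
  match N with O => RtoC 1 | S m => Cmult (pall f m) (f m) end.
Fixpoint pR (f : nat -> C) (N k : nat) : C :=
  match k with O => RtoC 1 | S j => Cmult (pR f N j) (f (N + j)%nat) end.
Fixpoint sR (g : nat -> R) (N k : nat) : R :=
  match k with O => 0 | S j => sR g N j + g (N + j)%nat end.

Lemma pall_split f N k : pall f (N + k) = Cmult (pall f N) (pR f N k).
Proof.
  induction k; simpl.
  - rewrite Nat.add_0_r. ring.
  - rewrite Nat.add_succ_r. simpl. rewrite IHk. ring.
Qed.

Lemma pall_pR f N : pall f N = pR f 0 N.
Proof. pose proof (pall_split f 0 N). simpl in H. rewrite H. ring. Qed.

Lemma sR_nonneg g N k : (forall m, 0 <= g m) -> 0 <= sR g N k.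
Proof. intros H; induction k; simpl. lra. pose proof (H (N+k)%nat). lra. Qed.

Lemma sR_le g h N k : (forall m, (N <= m)%nat -> g m <= h m) -> sR g N k <= sR h N k.
Proof. intros H; induction k; simpl. lra. pose proof (H (N+k)%nat ltac:(lia)). lra. Qed.

Lemma sR_split g N k j : sR g N (k + j) = sR g N k + sR g (N + k) j.
Proof.
  induction j; simpl. rewrite Nat.add_0_r. lra.
  rewrite Nat.add_succ_r. simpl. rewrite IHj. rewrite Nat.add_assoc. lra.
Qed.

Lemma real_aux1 S x : 0 <= S -> 0 <= x -> S + x < 1 -> (1 + x) / (1 - S) <= 1 / (1 - S - x).
Proof.
  intros. apply Rmult_le_reg_r with ((1 - S) * (1 - S - x)).
  apply Rmult_lt_0_compat; lra.
  replace ((1 + x) / (1 - S) * ((1 - S) * (1 - S - x))) with ((1+x)*(1-S-x)) by (field; lra).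
  replace (1 / (1 - S - x) * ((1 - S) * (1 - S - x))) with (1 - S) by (field; lra).
  nra.
Qed.

Lemma Cmod_1plus_le (a : C) : Cmod (Cplus 1 a) <= 1 + Cmod a.
Proof. eapply Rle_trans. apply Cmod_triangle. rewrite Cmod_1. lra. Qed.

Lemma Cmod_1plus_ge (a : C) : 1 - Cmod a <= Cmod (Cplus 1 a).
Proof.
  pose proof (Cmod_rev_tri 1 (Cplus 1 a)). rewrite Cmod_1 in H.
  replace (Cminus 1 (Cplus 1 a)) with (Copp a) in H by (apply injective_projections; simpl; ring).
  replace (Cmod (Copp a)) with (Cmod a) in H. lra.
  unfold Cmod; simpl. f_equal. ring.
Qed.

Lemma pR_m1 (a : nat -> C) N k :
  sR (fun m => Cmod (a m)) N k < 1 ->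
  Cmod (Cminus (pR (fun m => Cplus 1 (a m)) N k) 1) <= 1 / (1 - sR (fun m => Cmod (a m)) N k) - 1.
Proof.
  induction k; simpl; intros H.
  - replace (Cminus 1 1) with (RtoC 0) by (apply injective_projections; simpl; ring).
    rewrite Cmod_0. replace (1 / (1 - 0) - 1) with 0 by field. lra.
  - set (S := sR (fun m => Cmod (a m)) N k) in *.
    set (x := Cmod (a (N + k)%nat)) in *.
    assert (0 <= S) by (apply sR_nonneg; intros; apply Cmod_ge_0).
    assert (0 <= x) by apply Cmod_ge_0.
    specialize (IHk ltac:(lra)).
    set (P := pR (fun m => Cplus 1 (a m)) N k) in *.
    replace (Cminus (Cmult P (Cplus 1 (a (N+k)%nat))) 1) with
      (Cplus (Cmult (Cminus P 1) (Cplus 1 (a (N+k)%nat))) (a (N+k)%nat)) by ring.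
    eapply Rle_trans. apply Cmod_triangle. rewrite Cmod_mult.
    pose proof (Cmod_1plus_le (a (N+k)%nat)). fold x in H2.
    pose proof (Cmod_ge_0 (Cminus P 1)).
    assert (Cmod (Cminus P 1) * Cmod (Cplus 1 (a (N + k)%nat)) <= (1 / (1 - S) - 1) * (1 + x)).
    { apply Rmult_le_compat; try lra. apply Cmod_ge_0. }
    pose proof (real_aux1 S x H0 H1 H).
    replace (1 / (1 - (S + x)) - 1) with (1 / (1 - S - x) - 1) by (f_equal; f_equal; ring).
    replace ((1 / (1 - S) - 1) * (1 + x)) with ((1 + x) / (1 - S) - 1 - x) in H4 by (field; lra).
    fold x. lra.
Qed.

Lemma pR_le_exp (a : nat -> C) N k :
  Cmod (pR (fun m => Cplus 1 (a m)) N k) <= exp (sR (fun m => Cmod (a m)) N k).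
Proof.
  induction k; simpl.
  - rewrite Cmod_1, exp_0. lra.
  - rewrite Cmod_mult, exp_plus. apply Rmult_le_compat; try apply Cmod_ge_0; auto.
    eapply Rle_trans. apply Cmod_1plus_le. apply exp_ineq1_le.
Qed.

Lemma pR_ge (a : nat -> C) N k : (forall m, Cmod (a m) <= 1) ->
  1 - sR (fun m => Cmod (a m)) N k <= Cmod (pR (fun m => Cplus 1 (a m)) N k).
Proof.
  intros Ha. induction k; simpl.
  - rewrite Cmod_1. lra.
  - rewrite Cmod_mult.
    set (S := sR (fun m => Cmod (a m)) N k) in *.
    set (x := Cmod (a (N + k)%nat)) in *.
    assert (0 <= S) by (apply sR_nonneg; intros; apply Cmod_ge_0).
    assert (0 <= x) by apply Cmod_ge_0.
    assert (x <= 1) by apply Ha.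
    pose proof (Cmod_1plus_ge (a (N+k)%nat)). fold x in H2.
    pose proof (Cmod_ge_0 (pR (fun m => Cplus 1 (a m)) N k)).
    assert (Cmod (pR (fun m => Cplus 1 (a m)) N k) * (1 - x) <=
            Cmod (pR (fun m => Cplus 1 (a m)) N k) * Cmod (Cplus 1 (a (N + k)%nat)))
      by (apply Rmult_le_compat_l; lra).
    assert ((1 - S) * (1 - x) <= Cmod (pR (fun m => Cplus 1 (a m)) N k) * (1 - x))
      by (apply Rmult_le_compat_r; lra).
    nra.
Qed.

Lemma pall_cauchy (a : nat -> C) (t : nat -> R) :
  (forall N k, sR (fun m => Cmod (a m)) N k <= t N) ->
  (forall e, 0 < e -> exists N, t N <= e) ->
  CCauchy (pall (fun m => Cplus 1 (a m))).
Proof.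
  intros Ht Hz eps He.
  set (K := exp (t 0%nat)). assert (HK : 0 < K) by apply exp_pos.
  destruct (Hz (Rmin (1/2) (eps / (8 * K)))) as [N HN].
  { apply Rmin_pos. lra. apply Rdiv_lt_0_compat; lra. }
  pose proof (Rmin_l (1/2) (eps / (8 * K))). pose proof (Rmin_r (1/2) (eps / (8 * K))).
  exists N. intros m n Hm Hn.
  replace m with (N + (m - N))%nat by lia. replace n with (N + (n - N))%nat by lia.
  rewrite !pall_split.
  assert (Hb : forall k, Cmod (Cminus (pR (fun m => Cplus 1 (a m)) N k) 1) <= eps / (4 * K)).
  { intros k. pose proof (Ht N k) as H1.
    assert (0 <= sR (fun m => Cmod (a m)) N k) by (apply sR_nonneg; intros; apply Cmod_ge_0).
    eapply Rle_trans. apply pR_m1. lra.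
    set (S := sR (fun m => Cmod (a m)) N k) in *.
    replace (1 / (1 - S) - 1) with (S / (1 - S)) by (field; lra).
    apply Rmult_le_reg_r with (1 - S). lra.
    replace (S / (1 - S) * (1 - S)) with S by (field; lra).
    assert (S <= eps / (8*K)) by lra.
    assert (eps / (4 * K) = 2 * (eps / (8 * K))) by (field; lra). nra. }
  replace (Cminus (Cmult (pall (fun m0 => Cplus 1 (a m0)) N) (pR (fun m0 => Cplus 1 (a m0)) N (m - N)))
           (Cmult (pall (fun m0 => Cplus 1 (a m0)) N) (pR (fun m0 => Cplus 1 (a m0)) N (n - N))))
    with (Cmult (pall (fun m0 => Cplus 1 (a m0)) N)
           (Cplus (Cminus (pR (fun m0 => Cplus 1 (a m0)) N (m - N)) 1)
                  (Cminus 1 (pR (fun m0 => Cplus 1 (a m0)) N (n - N))))) by ring.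
  rewrite Cmod_mult.
  assert (HH1 : Cmod (pall (fun m0 => Cplus 1 (a m0)) N) <= K).
  { rewrite pall_pR. eapply Rle_trans. apply pR_le_exp. unfold K.
    destruct (Rle_lt_or_eq_dec _ _ (Ht 0%nat N)) as [L|E]. left; apply exp_increasing; auto. rewrite E; lra. }
  pose proof (Cmod_triangle (Cminus (pR (fun m0 => Cplus 1 (a m0)) N (m - N)) 1)
                  (Cminus 1 (pR (fun m0 => Cplus 1 (a m0)) N (n - N)))) as HH3.
  rewrite (Cmod_minus_sym 1) in HH3.
  pose proof (Hb (m - N)%nat) as HH4. pose proof (Hb (n - N)%nat) as HH5.
  assert (HH6 : Cmod (pall (fun m0 => Cplus 1 (a m0)) N) *
    Cmod (Cplus (Cminus (pR (fun m0 => Cplus 1 (a m0)) N (m - N)) 1)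
           (Cminus 1 (pR (fun m0 => Cplus 1 (a m0)) N (n - N)))) <= K * (eps / (2 * K))).
  { apply Rmult_le_compat; try apply Cmod_ge_0; auto.
    replace (eps / (2*K)) with (eps/(4*K) + eps/(4*K)) by (field; lra). lra. }
  replace (K * (eps / (2 * K))) with (eps / 2) in HH6 by (field; lra). lra.
Qed.

Lemma sR_scal c g N k : sR (fun m => c * g m) N k = c * sR g N k.
Proof. induction k; simpl. ring. rewrite IHk. ring. Qed.

Lemma sR_inv_sq_tel N k : (1 <= N)%nat ->
  sR (fun m => / (INR m) ^ 2) N k <= 2 / (2 * INR N - 1) - 2 / (2 * INR (N + k) - 1).
Proof.
  intros HN. assert (1 <= INR N) by (apply le_INR in HN; simpl in HN; lra).
  induction k; cbn [sR].
  - rewrite Nat.add_0_r. lra.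
  - rewrite Nat.add_succ_r, S_INR. rewrite plus_INR in *.
    set (M := INR N + INR k) in *.
    assert (INR N <= M) by (unfold M; pose proof (pos_INR k); lra).
    assert (/ M ^ 2 <= 2 / (2 * M - 1) - 2 / (2 * (M + 1) - 1)).
    { replace (2 / (2 * M - 1) - 2 / (2 * (M + 1) - 1)) with (4 / ((2*M-1)*(2*M+1))) by (field; lra).
      apply Rmult_le_reg_r with (M^2 * ((2*M-1)*(2*M+1))). apply Rmult_lt_0_compat. nra. nra.
      replace (/ M ^ 2 * (M ^ 2 * ((2 * M - 1) * (2 * M + 1)))) with ((2 * M - 1) * (2 * M + 1)) by (field; lra).
      replace (4 / ((2 * M - 1) * (2 * M + 1)) * (M ^ 2 * ((2 * M - 1) * (2 * M + 1)))) with (4 * M^2) by (field; nra).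
      nra. }
    lra.
Qed.

Lemma sR_inv_sq N k : (1 <= N)%nat -> sR (fun m => / (INR m) ^ 2) N k <= 2 / (2 * INR N - 1).
Proof.
  intros HN. pose proof (sR_inv_sq_tel N k HN).
  assert (0 <= 2 / (2 * INR (N + k) - 1)).
  { apply Rlt_le, Rdiv_lt_0_compat. lra. rewrite plus_INR. apply le_INR in HN. simpl in HN.
    pose proof (pos_INR k). lra. }
  lra.
Qed.

Definition tsq (Cc : R) (N : nat) : R := Cc * (2 / (2 * INR (Nat.max N 1) - 1)).

Lemma tsq_bound (a : nat -> C) (Cc : R) : 0 <= Cc -> a 0%nat = RtoC 0 ->
  (forall m, (1 <= m)%nat -> Cmod (a m) <= Cc / (INR m)^2) ->
  forall N k, sR (fun m => Cmod (a m)) N k <= tsq Cc N.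
Proof.
  intros HC H0 Ha.
  assert (Hg : forall N k, (1 <= N)%nat -> sR (fun m => Cmod (a m)) N k <= tsq Cc N).
  { intros N k HN. unfold tsq. rewrite Nat.max_l by lia.
    eapply Rle_trans. apply sR_le with (h := fun m => Cc * / INR m ^2).
    intros m Hm. unfold Rdiv in Ha. apply Ha. lia.
    rewrite sR_scal. apply Rmult_le_compat_l. auto. apply sR_inv_sq. auto. }
  intros N k. destruct N. 2: apply Hg; lia.
  destruct k. simpl. unfold tsq. simpl. apply Rmult_le_pos. auto. lra.
  replace (S k) with (1 + k)%nat by lia. rewrite sR_split. simpl.
  rewrite H0, Cmod_0. replace (tsq Cc 0) with (tsq Cc 1) by reflexivity.
  pose proof (Hg 1%nat k (le_n _)). simpl in H. lra.
Qed.

Lemma tsq_small Cc : 0 <= Cc -> forall e, 0 < e -> exists N, tsq Cc N <= e.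
Proof.
  intros HC e He.
  destruct (archimed_cor1 (e / (2 * Cc + 1))) as [N [HN1 HN2]].
  apply Rdiv_lt_0_compat; lra.
  exists N. unfold tsq. rewrite Nat.max_l by lia.
  assert (1 <= INR N) by (apply le_INR in HN2; simpl in HN2; lra).
  apply Rle_trans with (2 * Cc * / INR N).
  { replace (Cc * (2 / (2 * INR N - 1))) with (2 * Cc * / (2 * INR N - 1)) by (field; lra).
    apply Rmult_le_compat_l. lra. apply Rinv_le_contravar; lra. }
  apply Rle_trans with (2 * Cc * (e / (2 * Cc + 1))). apply Rmult_le_compat_l; lra.
  apply Rmult_le_reg_r with (2 * Cc + 1). lra.
  replace (2 * Cc * (e / (2 * Cc + 1)) * (2 * Cc + 1)) with (2 * Cc * e) by (field; lra). nra.
Qed.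

Lemma pall_cauchy_sq (a : nat -> C) (Cc : R) : 0 <= Cc -> a 0%nat = RtoC 0 ->
  (forall m, (1 <= m)%nat -> Cmod (a m) <= Cc / (INR m)^2) ->
  CCauchy (pall (fun m => Cplus 1 (a m))).
Proof.
  intros. apply pall_cauchy with (t := tsq Cc). apply tsq_bound; auto. apply tsq_small; auto.
Qed.

Lemma tsq_mono Cc N M : 0 <= Cc -> (N <= M)%nat -> tsq Cc M <= tsq Cc N.
Proof.
  intros HC H. unfold tsq. apply Rmult_le_compat_l. auto.
  assert (1 <= INR (Nat.max N 1)) by (apply (le_INR 1); lia).
  assert (INR (Nat.max N 1) <= INR (Nat.max M 1)) by (apply le_INR; lia).
  unfold Rdiv. apply Rmult_le_compat_l. lra. apply Rinv_le_contravar; lra.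
Qed.

Lemma sR_sq_bound (g : nat -> C) Cc N k : (1 <= N)%nat -> 0 <= Cc ->
  (forall m, (1 <= m)%nat -> Cmod (g m) <= Cc / (INR m)^2) ->
  sR (fun m => Cmod (g m)) N k <= tsq Cc N.
Proof.
  intros HN HC Hg. unfold tsq. rewrite Nat.max_l by lia.
  eapply Rle_trans. apply sR_le with (h := fun m => Cc * / INR m ^2).
  intros m Hm. unfold Rdiv in Hg. apply Hg. lia.
  rewrite sR_scal. apply Rmult_le_compat_l. auto. apply sR_inv_sq. auto.
Qed.

Fixpoint sC (g : nat -> C) (N k : nat) : C :=
  match k with O => RtoC 0 | S j => Cplus (sC g N j) (g (N + j)%nat) end.

Lemma sum_1_to_split g X k : sum_1_to g (X + k) = Cplus (sum_1_to g X) (sC g (S X) k).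
Proof.
  induction k; simpl.
  - rewrite Nat.add_0_r. ring.
  - rewrite Nat.add_succ_r. simpl. rewrite IHk. ring.
Qed.

Lemma Cmod_sC g N k : Cmod (sC g N k) <= sR (fun m => Cmod (g m)) N k.
Proof.
  induction k; simpl. rewrite Cmod_0. lra.
  eapply Rle_trans. apply Cmod_triangle. lra.
Qed.

Lemma sum_cauchy_sq (g : nat -> C) Cc : 0 <= Cc ->
  (forall m, (1 <= m)%nat -> Cmod (g m) <= Cc / (INR m)^2) ->
  CCauchy (sum_1_to g).
Proof.
  intros HC Hg eps He.
  destruct (tsq_small Cc HC (eps / 3)) as [N HN]. lra.
  exists (S N). intros m n Hm Hn.
  assert (Hb : forall k, Cmod (sC g (S (S N)) k) <= eps / 3).
  { intros k. eapply Rle_trans. apply Cmod_sC.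
    eapply Rle_trans. 2: apply HN.
    eapply Rle_trans. 2: apply (tsq_mono Cc N (S (S N))); auto.
    apply sR_sq_bound; auto. lia. }
  replace m with (S N + (m - S N))%nat by lia. replace n with (S N + (n - S N))%nat by lia.
  rewrite !sum_1_to_split.
  replace (Cminus (Cplus (sum_1_to g (S N)) (sC g (S (S N)) (m - S N)))
             (Cplus (sum_1_to g (S N)) (sC g (S (S N)) (n - S N))))
    with (Cplus (sC g (S (S N)) (m - S N)) (Copp (sC g (S (S N)) (n - S N)))) by ring.
  eapply Rle_lt_trans. apply Cmod_triangle.
  replace (Cmod (Copp (sC g (S (S N)) (n - S N)))) with (Cmod (sC g (S (S N)) (n - S N))).
  pose proof (Hb (m - S N)%nat). pose proof (Hb (n - S N)%nat). lra.
  unfold Cmod; simpl. f_equal. ring.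
Qed.

Lemma Ccvg_const c : Ccvg (fun _ => c) c.
Proof.
  intros eps He. exists 0%nat. intros. replace (Cminus c c) with (RtoC 0) by ring.
  rewrite Cmod_0. auto.
Qed.

Lemma Ccvg_plus u v a b : Ccvg u a -> Ccvg v b -> Ccvg (fun n => Cplus (u n) (v n)) (Cplus a b).
Proof.
  intros Hu Hv eps He. destruct (Hu (eps/2)) as [N1 H1]. lra. destruct (Hv (eps/2)) as [N2 H2]. lra.
  exists (N1 + N2)%nat. intros n Hn.
  replace (Cminus (Cplus (u n) (v n)) (Cplus a b)) with (Cplus (Cminus (u n) a) (Cminus (v n) b)) by ring.
  eapply Rle_lt_trans. apply Cmod_triangle. pose proof (H1 n ltac:(lia)). pose proof (H2 n ltac:(lia)). lra.
Qed.

Lemma Ccvg_sub u l p : (1 <= p)%nat -> Ccvg u l -> Ccvg (fun Y => u (p * Y)%nat) l.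
Proof.
  intros Hp H eps He. destruct (H eps He) as [N HN]. exists N. intros n Hn. apply HN. nia.
Qed.

Lemma Ccvg_close u l c b N0 : Ccvg u l -> (forall n, (N0 <= n)%nat -> Cmod (Cminus (u n) c) <= b) ->
  Cmod (Cminus l c) <= b.
Proof.
  intros H Hb. apply Rnot_lt_le. intros Hlt.
  destruct (H (Cmod (Cminus l c) - b)) as [N HN]. lra.
  specialize (HN (N + N0)%nat ltac:(lia)). specialize (Hb (N + N0)%nat ltac:(lia)).
  pose proof (Cmod_tri3 l (u (N + N0)%nat) c). rewrite (Cmod_minus_sym l (u _)) in H0. lra.
Qed.

Lemma Ccvg_mod_bounds u l lo hi N0 : Ccvg u l ->
  (forall n, (N0 <= n)%nat -> lo <= Cmod (u n) <= hi) -> lo <= Cmod l <= hi.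
Proof.
  intros H Hb. split.
  - apply Rnot_lt_le. intros Hlt.
    destruct (H (lo - Cmod l)) as [N HN]. lra.
    specialize (HN (N + N0)%nat ltac:(lia)). specialize (Hb (N + N0)%nat ltac:(lia)).
    pose proof (Cmod_rev_tri (u (N+N0)%nat) l). lra.
  - apply Rnot_lt_le. intros Hlt.
    destruct (H (Cmod l - hi)) as [N HN]. lra.
    specialize (HN (N + N0)%nat ltac:(lia)). specialize (Hb (N + N0)%nat ltac:(lia)).
    pose proof (Cmod_rev_tri l (u (N+N0)%nat)). rewrite Cmod_minus_sym in H0. lra.
Qed.

Lemma sR_term g N k j : (forall m, 0 <= g m) -> (j < k)%nat -> g (N + j)%nat <= sR g N k.
Proof.
  intros Hg Hj. induction k. lia. simpl.
  destruct (Nat.eq_dec j k). subst. pose proof (sR_nonneg g N k Hg). lra.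
  pose proof (IHk ltac:(lia)). pose proof (Hg (N+k)%nat). lra.
Qed.

Lemma chi_bound q chi : dirichlet_character q chi -> forall n, Cmod (chi n) <= 1.
Proof.
  intros [Hq [H1 [Hm [Hp Hz]]]] n.
  assert (Hper : forall r k, chi (r + k * q)%nat = chi r).
  { intros r k. induction k. simpl. rewrite Nat.add_0_r. auto.
    replace (r + S k * q)%nat with ((r + k * q) + q)%nat by lia. rewrite Hp. auto. }
  set (M := sR (fun r => Cmod (chi r)) 0 q).
  assert (HM : forall n, Cmod (chi n) <= M).
  { intros m. rewrite (Nat.div_mod_eq m q). rewrite Nat.add_comm.
    replace (q * (m / q))%nat with ((m/q) * q)%nat by lia. rewrite Hper.
    apply (sR_term (fun r => Cmod (chi r)) 0 q (m mod q)). intros; apply Cmod_ge_0.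
    apply Nat.mod_upper_bound. lia. }
  assert (Hpow : forall k, Cmod (chi (n ^ k)%nat) = Cmod (chi n) ^ k).
  { induction k. simpl. rewrite H1, Cmod_1. auto.
    simpl. rewrite Hm, Cmod_mult, IHk. auto. }
  apply Rnot_lt_le. intros Hlt.
  destruct (Pow_x_infinity (Cmod (chi n)) ltac:(rewrite Rabs_pos_eq; [lra|apply Cmod_ge_0]) (M + 1)) as [N HN].
  specialize (HN N (le_n _)). rewrite <- Hpow in HN. rewrite Rabs_pos_eq in HN by apply Cmod_ge_0.
  specialize (HM (n ^ N)%nat). lra.
Qed.

Definition base (chi : nat -> C) (s : nat) (n : nat) : C := Cdiv (chi n) (RtoC (INR n ^ s)).

Fixpoint rough (N m : nat) : bool :=
  match N with
  | O => true
  | S j => if prime_dec (Z.of_nat j) then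
             (if Zdivide_dec (Z.of_nat j) (Z.of_nat m) then false else rough j m)
           else rough j m
  end.

Definition G chi s N n : C := if rough N n then base chi s n else RtoC 0.

Lemma rough_mul p k N : prime (Z.of_nat p) -> (N <= p)%nat -> rough N (p * k) = rough N k.
Proof.
  intros Hp. induction N; intros HN; simpl; auto.
  destruct (prime_dec (Z.of_nat N)) as [Hj|Hj]; [|apply IHN; lia].
  assert (Hiff : (Z.of_nat N | Z.of_nat (p * k)) <-> (Z.of_nat N | Z.of_nat k)).
  { rewrite Nat2Z.inj_mul. split; intros H.
    - destruct (prime_mult _ Hj _ _ H) as [H2|H2]; auto. exfalso.
      pose proof (prime_ge_2 _ Hj).
      destruct (prime_divisors _ Hp _ H2) as [E|[E|[E|E]]]; lia.
    - apply Z.divide_mul_r; auto. }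
  destruct (Zdivide_dec (Z.of_nat N) (Z.of_nat (p * k))) as [D1|D1];
  destruct (Zdivide_dec (Z.of_nat N) (Z.of_nat k)) as [D2|D2]; try tauto.
  apply IHN; lia.
Qed.

Lemma RtoC_neq0 (x : R) : x <> 0 -> RtoC x <> RtoC 0.
Proof. intros H E. apply H. injection E. auto. Qed.

Lemma INR_pow_neq0 n s : (1 <= n)%nat -> INR n ^ s <> 0.
Proof. intros. apply pow_nonzero. apply not_0_INR. lia. Qed.

Lemma base_mul q chi s p k : dirichlet_character q chi -> (1 <= p)%nat -> (1 <= k)%nat ->
  base chi s (p * k) = Cmult (base chi s p) (base chi s k).
Proof.
  intros [_ [_ [Hm _]]] Hp Hk. unfold base. rewrite Hm, mult_INR, Rpow_mult_distr, RtoC_mult.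
  pose proof (RtoC_neq0 _ (INR_pow_neq0 p s Hp)). pose proof (RtoC_neq0 _ (INR_pow_neq0 k s Hk)).
  field. auto.
Qed.

Lemma sum_1_to_ext g h X : (forall n, (1 <= n)%nat -> g n = h n) -> sum_1_to g X = sum_1_to h X.
Proof. intros H. induction X; simpl; auto. rewrite IHX, H by lia. auto. Qed.

Lemma sum_1_to_minus g h X : sum_1_to (fun n => Cminus (g n) (h n)) X = Cminus (sum_1_to g X) (sum_1_to h X).
Proof. induction X; simpl. ring. rewrite IHX. ring. Qed.

Lemma sum_1_to_scal c g X : sum_1_to (fun n => Cmult c (g n)) X = Cmult c (sum_1_to g X).
Proof. induction X; simpl. ring. rewrite IHX. ring. Qed.

Lemma sC_zero g N k : (forall j, (j < k)%nat -> g (N + j)%nat = RtoC 0) -> sC g N k = RtoC 0.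
Proof.
  intros H. induction k; simpl; auto. rewrite IHk by (intros; apply H; lia). rewrite H by lia. ring.
Qed.

Lemma sum_blocks p h Y : (1 <= p)%nat ->
  (forall n, ~ (Z.of_nat p | Z.of_nat n) -> h n = RtoC 0) ->
  sum_1_to h (p * Y) = sum_1_to (fun k => h (p * k)%nat) Y.
Proof.
  intros Hp Hh. induction Y.
  - rewrite Nat.mul_0_r. auto.
  - replace (p * S Y)%nat with (p * Y + S (p - 1))%nat by lia.
    rewrite sum_1_to_split. simpl sC. rewrite sC_zero. simpl. rewrite IHY.
    replace (S (p * Y + (p - 1)))%nat with (p * S Y)%nat by lia. ring.
    intros j Hj. apply Hh. intros Hd.
    assert (Hd2 : (Z.of_nat p | Z.of_nat (j + 1))).
    { replace (Z.of_nat (j + 1)) with (Z.of_nat (S (p * Y) + j) - Z.of_nat p * Z.of_nat Y)%Z by lia.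
      apply Z.divide_sub_r. auto. apply Z.divide_mul_l. apply Z.divide_refl. }
    apply Z.divide_pos_le in Hd2; lia.
Qed.

Lemma sieve_step q chi s p Y : dirichlet_character q chi -> prime (Z.of_nat p) ->
  sum_1_to (G chi s (S p)) (p * Y) =
  Cminus (sum_1_to (G chi s p) (p * Y)) (Cmult (base chi s p) (sum_1_to (G chi s p) Y)).
Proof.
  intros Hchi Hp.
  pose proof (prime_ge_2 _ Hp) as Hp2.
  set (D := fun n => if Zdivide_dec (Z.of_nat p) (Z.of_nat n) then G chi s p n else RtoC 0).
  assert (E1 : forall n, G chi s (S p) n = Cminus (G chi s p n) (D n)).
  { intros n. unfold G, D. simpl rough at 1. destruct (prime_dec (Z.of_nat p)); [|contradiction].
    destruct (Zdivide_dec (Z.of_nat p) (Z.of_nat n)); unfold G; destruct (rough p n); ring. }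
  rewrite (sum_1_to_ext _ (fun n => Cminus (G chi s p n) (D n))) by auto.
  rewrite sum_1_to_minus. f_equal.
  rewrite sum_blocks. 2: lia.
  2: { intros n Hn. unfold D. destruct (Zdivide_dec (Z.of_nat p) (Z.of_nat n)); tauto. }
  rewrite <- sum_1_to_scal. apply sum_1_to_ext. intros k Hk.
  unfold D. destruct (Zdivide_dec (Z.of_nat p) (Z.of_nat (p * k))) as [_|F].
  2: { exfalso. apply F. rewrite Nat2Z.inj_mul. apply Z.divide_mul_l. apply Z.divide_refl. }
  unfold G. rewrite rough_mul by (auto; lia).
  destruct (rough p k). apply (base_mul q). auto. lia. lia. ring.
Qed.

Lemma Ccvg_minus u v a b : Ccvg u a -> Ccvg v b -> Ccvg (fun n => Cminus (u n) (v n)) (Cminus a b).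
Proof.
  intros Hu Hv eps He. destruct (Hu (eps/2)) as [N1 H1]. lra. destruct (Hv (eps/2)) as [N2 H2]. lra.
  exists (N1 + N2)%nat. intros n Hn.
  replace (Cminus (Cminus (u n) (v n)) (Cminus a b)) with (Cminus (Cminus (u n) a) (Cminus (v n) b)) by ring.
  eapply Rle_lt_trans. apply Cmod_tri3 with (b := RtoC 0).
  replace (Cminus (Cminus (u n) a) 0) with (Cminus (u n) a) by ring.
  replace (Cminus 0 (Cminus (v n) b)) with (Copp (Cminus (v n) b)) by ring.
  replace (Cmod (Copp (Cminus (v n) b))) with (Cmod (Cminus (v n) b)).
  pose proof (H1 n ltac:(lia)). pose proof (H2 n ltac:(lia)). lra.
  unfold Cmod; simpl. f_equal. ring.
Qed.

Lemma Cmod_RtoC_pos x : 0 <= x -> Cmod (RtoC x) = x.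
Proof. intros. rewrite Cmod_R. apply Rabs_pos_eq. auto. Qed.

Lemma base_bound q chi s n : dirichlet_character q chi -> (2 <= s)%nat -> (1 <= n)%nat ->
  Cmod (base chi s n) <= 1 / INR n ^ 2.
Proof.
  intros Hchi Hs Hn. unfold base.
  assert (1 <= INR n) by (apply (le_INR 1); lia).
  rewrite Cmod_div by (apply RtoC_neq0, INR_pow_neq0; auto).
  rewrite Cmod_RtoC_pos by (apply pow_le; lra).
  pose proof (chi_bound q chi Hchi n). pose proof (Cmod_ge_0 (chi n)).
  assert (INR n ^ 2 <= INR n ^ s) by (apply Rle_pow; auto).
  assert (0 < INR n ^ 2) by (apply pow_lt; lra).
  unfold Rdiv. apply Rmult_le_compat; try lra. apply Rlt_le, Rinv_0_lt_compat; lra.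
  apply Rinv_le_contravar; lra.
Qed.

Lemma G_bound q chi s N n : dirichlet_character q chi -> (2 <= s)%nat -> (1 <= n)%nat ->
  Cmod (G chi s N n) <= 1 / INR n ^ 2.
Proof.
  intros. unfold G. destruct (rough N n). eapply base_bound; eauto.
  rewrite Cmod_0. apply Rlt_le, Rdiv_lt_0_compat. lra. apply pow_lt. apply (lt_INR 0); lia.
Qed.

Definition tau chi s N := Clim (sum_1_to (G chi s N)).

Lemma tau_cvg q chi s N : dirichlet_character q chi -> (2 <= s)%nat ->
  Ccvg (sum_1_to (G chi s N)) (tau chi s N).
Proof.
  intros. apply CCauchy_lim. apply sum_cauchy_sq with (Cc := 1). lra.
  intros. eapply G_bound; eauto.
Qed.

Lemma tau_step_prime q chi s p : dirichlet_character q chi -> (2 <= s)%nat -> prime (Z.of_nat p) ->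
  tau chi s (S p) = Cminus (tau chi s p) (Cmult (base chi s p) (tau chi s p)).
Proof.
  intros Hchi Hs Hp. pose proof (prime_ge_2 _ Hp).
  apply (Ccvg_unique (fun Y => sum_1_to (G chi s (S p)) (p * Y))).
  - apply Ccvg_sub. lia. eapply tau_cvg; eauto.
  - eapply Ccvg_ext with (N0 := 0%nat).
    intros Y _. symmetry. eapply sieve_step; eauto.
    apply Ccvg_minus. apply Ccvg_sub. lia. eapply tau_cvg; eauto.
    apply Ccvg_mult. apply Ccvg_const. eapply tau_cvg; eauto.
Qed.

Lemma tau_step_nonprime q chi s N : dirichlet_character q chi -> (2 <= s)%nat -> ~ prime (Z.of_nat N) ->
  tau chi s (S N) = tau chi s N.
Proof.
  intros Hchi Hs Hp. unfold tau at 1. apply Ccvg_Clim.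
  apply Ccvg_ext with (u := sum_1_to (G chi s N)) (N0 := 0%nat).
  intros X _. apply sum_1_to_ext. intros n _. unfold G. simpl rough at 2.
  destruct (prime_dec (Z.of_nat N)). contradiction. auto.
  eapply tau_cvg; eauto.
Qed.

Lemma tau_formula q chi s N : dirichlet_character q chi -> (2 <= s)%nat ->
  tau chi s N = Cmult (Lfun s chi) (prod_primes_below (fun p => Cminus 1 (base chi s p)) N).
Proof.
  intros Hchi Hs. induction N.
  - simpl. rewrite Cmult_1_r. reflexivity.
  - simpl prod_primes_below. destruct (prime_dec (Z.of_nat N)) as [Hp|Hp].
    + rewrite (tau_step_prime q) by auto. rewrite IHN. ring.
    + rewrite (tau_step_nonprime q) by auto. rewrite IHN. ring.
Qed.

Lemma rough_false d N m : prime (Z.of_nat d) -> (d < N)%nat -> (Z.of_nat d | Z.of_nat m) -> rough N m = false.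
Proof.
  intros Hd. induction N; intros HN Hdm. lia. simpl.
  destruct (Nat.eq_dec d N) as [E|E].
  - subst. destruct (prime_dec (Z.of_nat N)); [|contradiction].
    destruct (Zdivide_dec (Z.of_nat N) (Z.of_nat m)); [auto|contradiction].
  - destruct (prime_dec (Z.of_nat N)).
    destruct (Zdivide_dec (Z.of_nat N) (Z.of_nat m)). auto. apply IHN; auto; lia.
    apply IHN; auto; lia.
Qed.

Lemma rough_one N : rough N 1 = true.
Proof.
  induction N; simpl; auto. destruct (prime_dec (Z.of_nat N)) as [Hp|]; auto.
  destruct (Zdivide_dec (Z.of_nat N) 1) as [D|]; auto.
  exfalso. apply Z.divide_1_r in D. pose proof (prime_ge_2 _ Hp). lia.
Qed.

Lemma prime_divisor_exists m : (2 <= m)%nat -> exists d, prime (Z.of_nat d) /\ (d <= m)%nat /\ (Z.of_nat d | Z.of_nat m).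
Proof.
  induction m as [m IH] using lt_wf_ind. intros Hm.
  destruct (prime_dec (Z.of_nat m)) as [Hp|Hp].
  - exists m. split; [auto|split; [lia|apply Z.divide_refl]].
  - destruct (not_prime_divide (Z.of_nat m) ltac:(lia) Hp) as [k [Hk Hkd]].
    destruct (IH (Z.to_nat k) ltac:(lia) ltac:(lia)) as [d [Hd1 [Hd2 Hd3]]].
    exists d. split; [auto|split; [lia|]]. rewrite Z2Nat.id in Hd3 by lia.
    eapply Z.divide_trans; eauto.
Qed.

Lemma sum_G_head q chi s N j : dirichlet_character q chi -> (1 <= j)%nat -> (j < N)%nat ->
  sum_1_to (G chi s N) j = RtoC 1.
Proof.
  intros [Hq [H1 _]] Hj HjN. induction j. lia.
  destruct j.
  - simpl. unfold G. rewrite rough_one. unfold base. rewrite H1. simpl.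
    replace (1 * 1)%R with 1%R by ring. rewrite pow1. field.
  - simpl sum_1_to. simpl sum_1_to in IHj. rewrite IHj by lia.
    destruct (prime_divisor_exists (S (S j)) ltac:(lia)) as [d [Hd1 [Hd2 Hd3]]].
    unfold G. rewrite (rough_false d) by (auto; lia). ring.
Qed.

Lemma tau_near1 q chi s N : dirichlet_character q chi -> (2 <= s)%nat -> (2 <= N)%nat ->
  Cmod (Cminus (tau chi s N) 1) <= tsq 1 N.
Proof.
  intros Hchi Hs HN. apply (Ccvg_close (sum_1_to (G chi s N)) _ _ _ N).
  eapply tau_cvg; eauto.
  intros X HX. replace X with ((N - 1) + (X - (N - 1)))%nat by lia.
  rewrite sum_1_to_split. rewrite (sum_G_head q) by (auto; lia).
  replace (S (N - 1)) with N by lia.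
  replace (Cminus (Cplus 1 (sC (G chi s N) N (X - (N - 1)))) 1) with (sC (G chi s N) N (X - (N - 1))) by ring.
  eapply Rle_trans. apply Cmod_sC. apply sR_sq_bound. lia. lra.
  intros. eapply G_bound; eauto.
Qed.

Lemma pall_ext f g N : (forall m, f m = g m) -> pall f N = pall g N.
Proof. intros H. induction N; simpl; auto. rewrite IHN, H. auto. Qed.

Lemma ppb_pall f N : prod_primes_below f N =
  pall (fun m => if prime_dec (Z.of_nat m) then f m else RtoC 1) N.
Proof. induction N; simpl; auto. rewrite IHN. auto. Qed.

Lemma ppb_mult f g N : prod_primes_below (fun m => Cmult (f m) (g m)) N =
  Cmult (prod_primes_below f N) (prod_primes_below g N).
Proof.
  induction N; simpl. ring. rewrite IHN. destruct (prime_dec (Z.of_nat N)); ring.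
Qed.

Lemma ppb_one f N : (forall m, prime (Z.of_nat m) -> f m = RtoC 1) -> prod_primes_below f N = RtoC 1.
Proof.
  intros H. induction N; simpl; auto. rewrite IHN. destruct (prime_dec (Z.of_nat N)).
  rewrite H by auto. ring. ring.
Qed.

Lemma ppb_ext f g N : (forall m, prime (Z.of_nat m) -> f m = g m) ->
  prod_primes_below f N = prod_primes_below g N.
Proof.
  intros H. induction N; simpl; auto. rewrite IHN. destruct (prime_dec (Z.of_nat N)); auto.
  rewrite H; auto.
Qed.

Lemma CCauchy_ext u v : (forall n, u n = v n) -> CCauchy u -> CCauchy v.
Proof. intros E H eps He. destruct (H eps He) as [N HN]. exists N. intros. rewrite <- !E. auto. Qed.

Lemma ppb_cauchy f Cc : 0 <= Cc ->
  (forall m, prime (Z.of_nat m) -> Cmod (Cminus (f m) 1) <= Cc / INR m ^ 2) ->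
  CCauchy (prod_primes_below f).
Proof.
  intros HC Hf.
  set (a := fun m => if prime_dec (Z.of_nat m) then Cminus (f m) 1 else RtoC 0).
  apply CCauchy_ext with (u := pall (fun m => Cplus 1 (a m))).
  { intros N. rewrite ppb_pall. apply pall_ext. intros m. unfold a.
    destruct (prime_dec (Z.of_nat m)); ring. }
  apply pall_cauchy_sq with (Cc := Cc); auto.
  - unfold a. destruct (prime_dec (Z.of_nat 0)) as [H|]; auto. exfalso; apply not_prime_0; auto.
  - intros m Hm. unfold a. destruct (prime_dec (Z.of_nat m)). auto.
    rewrite Cmod_0. apply Rmult_le_pos. auto. apply Rlt_le, Rinv_0_lt_compat, pow_lt.
    apply (lt_INR 0); lia.
Qed.

Lemma base_small q chi s p : dirichlet_character q chi -> (2 <= s)%nat -> prime (Z.of_nat p) ->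
  Cmod (base chi s p) <= 1/4.
Proof.
  intros Hchi Hs Hp. pose proof (prime_ge_2 _ Hp).
  eapply Rle_trans. eapply base_bound; eauto. lia.
  assert (2 <= INR p) by (apply (le_INR 2); lia).
  replace (1/4) with (/ (2^2)) by (simpl; field). unfold Rdiv. rewrite Rmult_1_l.
  apply Rinv_le_contravar. simpl; lra. apply pow_incr. lra.
Qed.

Lemma Cmod_1minus_ge (b : C) : 1 - Cmod b <= Cmod (Cminus 1 b).
Proof.
  pose proof (Cmod_1plus_ge (Copp b)). replace (Cmod (Copp b)) with (Cmod b) in H.
  replace (Cplus 1 (Copp b)) with (Cminus 1 b) in H by ring. auto.
  unfold Cmod; simpl. f_equal. ring.
Qed.

Lemma one_minus_base_ge q chi s p : dirichlet_character q chi -> (2 <= s)%nat -> prime (Z.of_nat p) ->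
  3/4 <= Cmod (Cminus 1 (base chi s p)).
Proof.
  intros Hchi Hs Hp. pose proof (base_small q chi s p Hchi Hs Hp).
  pose proof (Cmod_1minus_ge (base chi s p)). lra.
Qed.

Lemma one_minus_base_nz q chi s p : dirichlet_character q chi -> (2 <= s)%nat -> prime (Z.of_nat p) ->
  Cminus 1 (base chi s p) <> RtoC 0.
Proof.
  intros Hchi Hs Hp E. pose proof (one_minus_base_ge q chi s p Hchi Hs Hp).
  rewrite E, Cmod_0 in H. lra.
Qed.

Definition Efac chi s p := Cinv (Cminus 1 (base chi s p)).

Lemma tau_to_1 q chi s : dirichlet_character q chi -> (2 <= s)%nat -> Ccvg (tau chi s) (RtoC 1).
Proof.
  intros Hchi Hs eps He. destruct (tsq_small 1 ltac:(lra) (eps/2)) as [N0 HN0]. lra.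
  exists (N0 + 2)%nat. intros N HN.
  eapply Rle_lt_trans. apply (tau_near1 q); auto. lia.
  eapply Rle_lt_trans. apply (tsq_mono 1 N0 N). lra. lia. lra.
Qed.

Theorem euler q chi s : dirichlet_character q chi -> (2 <= s)%nat ->
  Ccvg (prod_primes_below (Efac chi s)) (Lfun s chi).
Proof.
  intros Hchi Hs.
  set (Q := prod_primes_below (fun p => Cminus 1 (base chi s p))).
  set (E := prod_primes_below (Efac chi s)).
  assert (HQ : Ccvg Q (Clim Q)).
  { apply CCauchy_lim. apply ppb_cauchy with (Cc := 1). lra.
    intros m Hm. replace (Cminus (Cminus 1 (base chi s m)) 1) with (Copp (base chi s m)) by ring.
    replace (Cmod (Copp (base chi s m))) with (Cmod (base chi s m)).
    eapply base_bound; eauto. pose proof (prime_ge_2 _ Hm). lia.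
    unfold Cmod; simpl. f_equal. ring. }
  assert (HE : Ccvg E (Clim E)).
  { apply CCauchy_lim. apply ppb_cauchy with (Cc := 4/3). lra.
    intros m Hm. pose proof (one_minus_base_nz q chi s m Hchi Hs Hm).
    pose proof (one_minus_base_ge q chi s m Hchi Hs Hm).
    pose proof (base_bound q chi s m Hchi Hs ltac:(pose proof (prime_ge_2 _ Hm); lia)).
    unfold Efac.
    replace (Cminus (Cinv (Cminus 1 (base chi s m))) 1) with
      (Cdiv (base chi s m) (Cminus 1 (base chi s m))) by (field; auto).
    rewrite Cmod_div by auto.
    assert (0 < INR m ^ 2) by (apply pow_lt; apply (lt_INR 0); pose proof (prime_ge_2 _ Hm); lia).
    apply Rmult_le_reg_r with (Cmod (Cminus 1 (base chi s m))). lra.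
    unfold Rdiv at 1. rewrite Rmult_assoc, Rinv_l, Rmult_1_r by lra.
    apply Rle_trans with (1 / INR m ^ 2); auto.
    replace (4 / 3 / INR m ^ 2 * Cmod (Cminus 1 (base chi s m))) with
      ((1 / INR m ^ 2) * (4/3 * Cmod (Cminus 1 (base chi s m)))) by (unfold Rdiv; ring).
    rewrite <- (Rmult_1_r (1 / INR m ^ 2)) at 1. apply Rmult_le_compat_l.
    apply Rlt_le, Rdiv_lt_0_compat; lra. lra. }
  assert (H1 : Cmult (Lfun s chi) (Clim Q) = RtoC 1).
  { apply (Ccvg_unique (tau chi s)).
    apply Ccvg_ext with (u := fun N => Cmult (Lfun s chi) (Q N)) (N0 := 0%nat).
    intros N _. unfold Q. symmetry. apply (tau_formula q); auto.
    apply Ccvg_mult. apply Ccvg_const. auto.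
    eapply tau_to_1; eauto. }
  assert (H2 : Cmult (Clim E) (Clim Q) = RtoC 1).
  { apply (Ccvg_unique (fun N => Cmult (E N) (Q N))).
    apply Ccvg_mult; auto.
    apply Ccvg_ext with (u := fun _ => RtoC 1) (N0 := 0%nat). 2: apply Ccvg_const.
    intros N _. unfold E, Q. rewrite <- ppb_mult. symmetry. apply ppb_one.
    intros m Hm. unfold Efac. apply Cinv_l. eapply one_minus_base_nz; eauto. }
  replace (Lfun s chi) with (Clim E). auto.
  transitivity (Cmult (Clim E) (Cmult (Lfun s chi) (Clim Q))). rewrite H1. ring.
  transitivity (Cmult (Lfun s chi) (Cmult (Clim E) (Clim Q))). ring. rewrite H2. ring.
Qed.

Definition Bfac (chi : nat -> C) (p : nat) : C :=
    Cplus (RtoC 1)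
      (Cdiv (Cmult (Cminus (chi p) (RtoC 1)) (RtoC (INR p)))
            (Cmult (Cminus (RtoC (INR p ^ 2)) (chi p)) (RtoC (INR p - 1)))).
Definition Afac (p : nat) : C := RtoC (1 - / (INR p * (INR p - 1))).

Lemma zpow_minus_nz (P : R) (x : C) k : 2 <= P -> Cmod x <= 1 -> (1 <= k)%nat ->
  Cminus (Cpow (RtoC P) k) x <> RtoC 0.
Proof.
  intros HP Hx Hk E. pose proof (Cmod_rev_tri (Cpow (RtoC P) k) x). rewrite E, Cmod_0 in H.
  rewrite <- RtoC_pow, Cmod_RtoC_pos in H by (apply pow_le; lra).
  assert (P ^ 1 <= P ^ k) by (apply Rle_pow; lra || lia). simpl in H0. lra.
Qed.

Lemma local_identity q chi p : dirichlet_character q chi -> prime (Z.of_nat p) ->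
  Bfac chi p = Cmult (Cmult (Cmult (Cmult (Afac p) (Efac chi 2 p)) (Efac chi 3 p)) (Efac chi 4 p))
                 (local_factor chi p).
Proof.
  intros Hchi Hp. pose proof (prime_ge_2 _ Hp).
  assert (HP : 2 <= INR p) by (apply (le_INR 2); lia).
  pose proof (chi_bound q chi Hchi p) as Hx.
  unfold Bfac, Afac, Efac, base, local_factor.
  assert (E1 : INR p * (INR p - 1) <> 0) by nra.
  rewrite (RtoC_minus 1 (/ _)), (RtoC_inv _ E1), !RtoC_mult, !RtoC_minus, !RtoC_pow.
  set (z := RtoC (INR p)). set (x := chi p).
  assert (Hz : z <> RtoC 0) by (apply RtoC_neq0; lra).
  assert (Hz1 : Cminus z 1 <> RtoC 0).
  { unfold z. rewrite <- RtoC_minus. apply RtoC_neq0. lra. }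
  assert (Hz2 : Cminus (Cminus (Cpow z 2) z) 1 <> RtoC 0).
  { unfold z. rewrite <- RtoC_pow, <- !RtoC_minus. apply RtoC_neq0. nra. }
  pose proof (zpow_minus_nz (INR p) x 2 HP Hx ltac:(lia)).
  pose proof (zpow_minus_nz (INR p) x 3 HP Hx ltac:(lia)).
  pose proof (zpow_minus_nz (INR p) x 4 HP Hx ltac:(lia)).
  fold z in H0, H1, H2.
  field. repeat split; assumption.
Qed.

Lemma div_le_div k a c b : 0 < a -> 0 < b -> k * b <= c * a -> k / a <= c / b.
Proof.
  intros Ha Hb H. apply Rmult_le_reg_r with (a * b). nra.
  replace (k / a * (a * b)) with (k * b) by (field; lra).
  replace (c / b * (a * b)) with (c * a) by (field; lra). auto.
Qed.

Lemma lf_bound q chi p : dirichlet_character q chi -> 33 <= INR p ->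
  Cmod (Cminus (local_factor chi p) 1) <= (5/2) / INR p ^ 5.
Proof.
  intros Hchi HP. pose proof (chi_bound q chi Hchi p) as Hx.
  set (P := INR p) in *.
  set (D := P^2 - P - 1).
  assert (HD : 1000 <= D) by (unfold D; nra).
  assert (HP4 : 0 < P^4) by (apply pow_lt; lra).
  assert (HP5 : 0 < P^5) by (apply pow_lt; lra).
  set (a1 := (2*P+1)/(P^4*D)). set (b1 := 1/(P^4*D)). set (b2 := 1/(P^5*D)).
  set (b3 := 1/P^7). set (c1 := 1/(P^8*D)).
  assert (E : Cminus (local_factor chi p) 1 =
     Cplus (Cplus (Cmult (chi p) (RtoC a1)) (Cmult (Cmult (chi p) (chi p)) (RtoC (b3 - b1 - b2))))
           (Cmult (Cmult (Cmult (chi p) (chi p)) (chi p)) (RtoC c1))).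
  { unfold local_factor, a1, b1, b2, b3, c1, D. fold P.
    assert (0 < P ^ 2 - P - 1) by nra.
    repeat (rewrite RtoC_minus || rewrite RtoC_plus || rewrite RtoC_mult || rewrite RtoC_pow ||
            (rewrite RtoC_div by (try apply Rgt_not_eq; try apply Rmult_gt_0_compat; try apply pow_lt; nra))).
    set (z := RtoC P). set (x := chi p).
    assert (Hz : z <> RtoC 0) by (apply RtoC_neq0; lra).
    assert (Hz2 : Cminus (Cminus (Cpow z 2) z) 1 <> RtoC 0).
    { unfold z. rewrite <- RtoC_pow, <- !RtoC_minus. apply RtoC_neq0. nra. }
    field. repeat split; assumption. }
  rewrite E.
  assert (Hxx : forall r, Cmod (Cmult (chi p) r) <= Cmod r).
  { intros r. rewrite Cmod_mult. pose proof (Cmod_ge_0 r). pose proof (Cmod_ge_0 (chi p)). nra. }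
  eapply Rle_trans. apply Cmod_triangle.
  eapply Rle_trans. apply Rplus_le_compat. apply Cmod_triangle. apply Rle_refl.
  rewrite <- !Cmult_assoc.
  eapply Rle_trans. apply Rplus_le_compat. apply Rplus_le_compat. apply Hxx.
  eapply Rle_trans. apply Hxx. apply Hxx.
  eapply Rle_trans. apply Hxx. eapply Rle_trans. apply Hxx. apply Hxx.
  rewrite !Cmod_R.
  assert (0 <= a1) by (unfold a1; apply Rlt_le, Rdiv_lt_0_compat; [lra | try apply Rmult_lt_0_compat; try apply pow_lt; lra]).
  assert (0 <= b1) by (unfold b1; apply Rlt_le, Rdiv_lt_0_compat; [lra | try apply Rmult_lt_0_compat; try apply pow_lt; lra]).
  assert (0 <= b2) by (unfold b2; apply Rlt_le, Rdiv_lt_0_compat; [lra | try apply Rmult_lt_0_compat; try apply pow_lt; lra]).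
  assert (0 <= b3) by (unfold b3; apply Rlt_le, Rdiv_lt_0_compat; [lra | apply pow_lt; lra]).
  assert (0 <= c1) by (unfold c1; apply Rlt_le, Rdiv_lt_0_compat; [lra | try apply Rmult_lt_0_compat; try apply pow_lt; lra]).
  rewrite (Rabs_pos_eq a1), (Rabs_pos_eq c1) by auto.
  assert (Rabs (b3 - b1 - b2) <= b3 + b1 + b2) by (apply Rabs_le; lra).
  assert (a1 <= (22/10) / P^5).
  { unfold a1. apply div_le_div. nra. auto. unfold D. simpl. nra. }
  assert (b1 <= (1/10) / P^5).
  { unfold b1. apply div_le_div. nra. auto. unfold D. simpl. nra. }
  assert (b2 <= (1/10) / P^5).
  { unfold b2. apply div_le_div. nra. auto. unfold D. simpl. nra. }
  assert (b3 <= (1/20) / P^5).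
  { unfold b3. apply div_le_div. apply pow_lt; lra. auto. replace (P^7) with (P^5 * P^2) by ring.
    assert (20 <= P^2) by nra. nra. }
  assert (c1 <= (1/20) / P^5).
  { unfold c1. apply div_le_div. apply Rmult_lt_0_compat. apply pow_lt; lra. lra. auto.
    replace (P^8 * D) with (P^5 * (P^3 * D)) by ring. assert (20 <= P^3 * D).
    { assert (1 <= P^3) by (apply pow_R1_Rle; lra). nra. } nra. }
  replace ((5/2) / P^5) with ((22/10) / P^5 + (1/10) / P^5 + (1/10) / P^5 + (1/20) / P^5 + (1/20) / P^5)
    by (field; lra).
  lra.
Qed.

Lemma pr_strict pr : consecutive_primes pr -> forall a b, (1 <= a)%nat -> (a < b)%nat -> (pr a < pr b)%nat.
Proof.
  intros [H1 [H2 [H3 H4]]] a b Ha Hab. induction Hab.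
  apply H3; auto. pose proof (H3 m ltac:(lia)). lia.
Qed.

Lemma pr_ge pr : consecutive_primes pr -> forall k, (1 <= k)%nat -> (k + 1 <= pr k)%nat.
Proof.
  intros Hc k Hk. induction Hk. destruct Hc as [H1 _]. lia.
  pose proof (pr_strict pr Hc m (S m) ltac:(lia) ltac:(lia)). lia.
Qed.

Lemma pr_next pr : consecutive_primes pr -> forall n m, (1 <= n)%nat -> prime (Z.of_nat m) ->
  (pr n < m)%nat -> (pr (S n) <= m)%nat.
Proof.
  intros Hc n m Hn Hm Hlt. destruct Hc as [H1 [H2 [H3 H4]]] eqn:Ec.
  destruct (H4 m Hm) as [k [Hk Ek]]. subst m.
  destruct (le_lt_dec k n) as [L|L].
  - destruct (Nat.eq_dec k n). subst. lia. pose proof (pr_strict pr Hc k n Hk ltac:(lia)). lia.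
  - destruct (Nat.eq_dec k (S n)). subst. lia. pose proof (pr_strict pr Hc (S n) k ltac:(lia) ltac:(lia)). lia.
Qed.

Lemma ppb_skip f K d : (forall m, (K <= m < K + d)%nat -> ~ prime (Z.of_nat m)) ->
  prod_primes_below f (K + d) = prod_primes_below f K.
Proof.
  intros H. induction d. rewrite Nat.add_0_r; auto.
  rewrite Nat.add_succ_r. simpl. rewrite IHd by (intros; apply H; lia).
  destruct (prime_dec (Z.of_nat (K + d))) as [P|P]. exfalso; apply (H (K+d)%nat); auto; lia. ring.
Qed.

Lemma prod_link pr f : consecutive_primes pr -> forall n, (1 <= n)%nat ->
  prod_1_to (fun k => f (pr k)) n = prod_primes_below f (S (pr n)).
Proof.
  intros Hc n Hn. induction Hn.
  - destruct Hc as [H1 _]. simpl. rewrite H1. simpl.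
    destruct (prime_dec 0) as [P|_]. exfalso; apply not_prime_0; auto.
    destruct (prime_dec 1) as [P|_]. exfalso; apply not_prime_1; auto.
    destruct (prime_dec 2) as [_|P]. 2: exfalso; apply P, prime_2. ring.
  - simpl prod_1_to. rewrite IHHn. simpl prod_primes_below at 2.
    destruct (prime_dec (Z.of_nat (pr (S m)))) as [_|P].
    2: exfalso; apply P; destruct Hc as [_ [H2 _]]; apply H2; lia.
    pose proof (pr_strict pr Hc m (S m) Hn ltac:(lia)).
    replace (pr (S m)) with (S (pr m) + (pr (S m) - S (pr m)))%nat at 2 by lia.
    rewrite ppb_skip. auto.
    intros k Hk Hp. pose proof (pr_next pr Hc m k Hn Hp ltac:(lia)). lia.
Qed.

Lemma sR_zero g N k : (forall m, (N <= m < N + k)%nat -> g m = 0) -> sR g N k = 0.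
Proof. intros H. induction k; simpl; auto. rewrite IHk by (intros; apply H; lia). rewrite H by lia. ring. Qed.

Lemma sR_mono_len g N j k : (forall m, 0 <= g m) -> (j <= k)%nat -> sR g N j <= sR g N k.
Proof.
  intros Hg Hjk. replace k with (j + (k - j))%nat by lia. rewrite sR_split.
  pose proof (sR_nonneg g (N + j) (k - j) Hg). lra.
Qed.

Lemma sR_shift g K K' d : (forall m, 0 <= g m) -> (K <= K')%nat ->
  (forall m, (K <= m < K')%nat -> g m = 0) -> sR g K d <= sR g K' d.
Proof.
  intros Hg HK Hz. destruct (le_lt_dec d (K' - K)) as [L|L].
  - rewrite sR_zero. apply sR_nonneg; auto. intros; apply Hz; lia.
  - replace d with ((K' - K) + (d - (K' - K)))%nat at 1 by lia. rewrite sR_split.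
    rewrite sR_zero by (intros; apply Hz; lia). replace (K + (K' - K))%nat with K' by lia.
    rewrite Rplus_0_l. apply sR_mono_len; auto. lia.
Qed.

Lemma tel3 N k : (3 <= N)%nat ->
  sR (fun m => 1 / ((INR m - 2) * (INR m - 1) * INR m)) N k <=
  1 / (2 * (INR N - 2) * (INR N - 1)) - 1 / (2 * (INR (N + k) - 2) * (INR (N + k) - 1)).
Proof.
  intros HN. assert (3 <= INR N) by (pose proof (le_INR 3 N HN) as HH; simpl in HH; lra).
  induction k; cbn [sR].
  - rewrite Nat.add_0_r. lra.
  - rewrite Nat.add_succ_r, S_INR. rewrite plus_INR in *.
    set (M := INR N + INR k) in *.
    assert (INR N <= M) by (unfold M; pose proof (pos_INR k); lra).
    assert (1 / ((M - 2) * (M - 1) * M) =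
      1 / (2 * (M - 2) * (M - 1)) - 1 / (2 * (M + 1 - 2) * (M + 1 - 1))).
    { field. repeat split; lra. }
    lra.
Qed.

Lemma tel3_le N k : (3 <= N)%nat ->
  sR (fun m => 1 / ((INR m - 2) * (INR m - 1) * INR m)) N k <= 1 / (2 * (INR N - 2) * (INR N - 1)).
Proof.
  intros HN. pose proof (tel3 N k HN).
  assert (3 <= INR (N + k)) by (pose proof (le_INR 3 (N + k) ltac:(lia)) as HH; simpl in HH; lra).
  assert (0 <= 1 / (2 * (INR (N + k) - 2) * (INR (N + k) - 1))).
  { apply Rlt_le, Rdiv_lt_0_compat. lra. apply Rmult_lt_0_compat; [apply Rmult_lt_0_compat|]; lra. }
  lra.
Qed.

Definition Tfac chi P0 m := if (m <=? P0)%nat then RtoC 1 else local_factor chi m.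
Definition Hfac chi P0 m := if (m <=? P0)%nat then local_factor chi m else RtoC 1.

Lemma pall_one f K : (forall m, (m < K)%nat -> f m = RtoC 1) -> pall f K = RtoC 1.
Proof. intros H. induction K; simpl; auto. rewrite IHK by (intros; apply H; lia). rewrite H by lia. ring. Qed.

Definition sigmaT (P : R) := 5 / (4 * P^2 * (P - 2) * (P - 1)).

Lemma T_bounds q chi P0 P : dirichlet_character q chi -> 33 <= INR P -> (P0 < P)%nat ->
  (forall m, prime (Z.of_nat m) -> (P0 < m)%nat -> (P <= m)%nat) ->
  forall N, (S P0 <= N)%nat ->
  1 - sigmaT (INR P) <= Cmod (prod_primes_below (Tfac chi P0) N) <= 1 / (1 - sigmaT (INR P)).
Proof.
  intros Hchi HP HP0 Hnext N HN.
  set (aT := fun m => if prime_dec (Z.of_nat m) then Cminus (Tfac chi P0 m) 1 else RtoC 0).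
  assert (E : prod_primes_below (Tfac chi P0) N = pR (fun m => Cplus 1 (aT m)) (S P0) (N - S P0)).
  { rewrite ppb_pall. rewrite (pall_ext _ (fun m => Cplus 1 (aT m))).
    2: { intros m. unfold aT. destruct (prime_dec (Z.of_nat m)); ring. }
    replace N with (S P0 + (N - S P0))%nat at 1 by lia. rewrite pall_split.
    rewrite pall_one. ring. intros m Hm. unfold aT, Tfac.
    destruct (prime_dec (Z.of_nat m)). replace (m <=? P0)%nat with true by (symmetry; apply Nat.leb_le; lia). ring. ring. }
  rewrite E.
  assert (Hsmall : forall m, (P <= m)%nat -> Cmod (aT m) <= (5/2) / INR m ^ 5).
  { intros m Hm. assert (INR P <= INR m) by (apply le_INR; auto).
    unfold aT, Tfac. destruct (prime_dec (Z.of_nat m)).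
    - replace (m <=? P0)%nat with false by (symmetry; apply Nat.leb_gt; lia).
      eapply lf_bound; eauto. lra.
    - rewrite Cmod_0. apply Rlt_le, Rdiv_lt_0_compat. lra. apply pow_lt. lra. }
  assert (Hzero : forall m, (m < P)%nat -> aT m = RtoC 0).
  { intros m Hm. unfold aT, Tfac. destruct (prime_dec (Z.of_nat m)) as [Pm|]; auto.
    destruct (le_lt_dec m P0). replace (m <=? P0)%nat with true by (symmetry; apply Nat.leb_le; lia). ring.
    pose proof (Hnext m Pm l). lia. }
  assert (Hle1 : forall m, Cmod (aT m) <= 1).
  { intros m. destruct (le_lt_dec P m) as [L|L].
    - eapply Rle_trans. apply Hsmall; auto. assert (INR P <= INR m) by (apply le_INR; auto).
      assert (INR m ^ 1 <= INR m ^ 5) by (apply Rle_pow; [lra|lia]). simpl in H0. rewrite Rmult_1_r in H0.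
      apply Rmult_le_reg_r with (INR m ^ 5). lra. unfold Rdiv. rewrite Rmult_assoc, Rinv_l by (apply Rgt_not_eq; lra). lra.
    - rewrite Hzero, Cmod_0 by auto. lra. }
  set (Ssum := sR (fun m => Cmod (aT m)) (S P0) (N - S P0)).
  assert (HS0 : 0 <= Ssum) by (apply sR_nonneg; intros; apply Cmod_ge_0).
  assert (HS : Ssum <= sigmaT (INR P)).
  { unfold Ssum. eapply Rle_trans. apply sR_shift with (K' := P). intros; apply Cmod_ge_0. lia.
    intros m Hm. rewrite Hzero, Cmod_0 by lia. auto.
    eapply Rle_trans. apply sR_le with (h := fun m => (5/2) / INR P ^ 2 * (1 / ((INR m - 2) * (INR m - 1) * INR m))).
    { intros m Hm. eapply Rle_trans. apply Hsmall; auto. assert (INR P <= INR m) by (apply le_INR; auto).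
      set (x := INR m) in *. set (y := INR P) in *.
      replace ((5/2) / y ^ 2 * (1 / ((x - 2) * (x - 1) * x))) with ((5/2) / (y^2 * ((x - 2) * (x - 1) * x))) by
        (field; repeat split; lra).
      apply div_le_div. apply pow_lt; lra. apply Rmult_lt_0_compat. nra.
      apply Rmult_lt_0_compat; [apply Rmult_lt_0_compat|]; lra.
      assert (y^2 <= x^2) by nra. assert ((x - 2) * (x - 1) * x <= x^3) by nra.
      assert (0 <= (x - 2) * (x - 1) * x) by (apply Rmult_le_pos; [apply Rmult_le_pos|]; lra).
      replace (x^5) with (x^2 * x^3) by ring. nra. }
    rewrite sR_scal. unfold sigmaT.
    assert (3 <= P)%nat by (apply INR_le; simpl; lra).
    pose proof (tel3_le P (N - S P0) H).
    assert (0 < INR P ^ 2) by (apply pow_lt; lra).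
    replace (5 / (4 * INR P ^ 2 * (INR P - 2) * (INR P - 1))) with
      ((5/2) / INR P ^ 2 * (1 / (2 * (INR P - 2) * (INR P - 1)))) by (field; repeat split; lra).
    apply Rmult_le_compat_l. apply Rlt_le, Rdiv_lt_0_compat; lra. auto. }
  assert (Hsig : sigmaT (INR P) < 1/2).
  { unfold sigmaT. set (y := INR P) in *.
    apply Rmult_lt_reg_r with (4 * y ^ 2 * (y - 2) * (y - 1)). 
    apply Rmult_lt_0_compat; [apply Rmult_lt_0_compat; [apply Rmult_lt_0_compat|] |]; try lra. nra.
    replace (5 / (4 * y ^ 2 * (y - 2) * (y - 1)) * (4 * y ^ 2 * (y - 2) * (y - 1))) with 5 by (field; repeat split; lra).
    nra. }
  split.
  - eapply Rle_trans. 2: apply pR_ge; auto. fold Ssum. lra.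
  - pose proof (pR_m1 aT (S P0) (N - S P0) ltac:(fold Ssum; lra)). fold Ssum in H.
    pose proof (Cmod_rev_tri (pR (fun m => Cplus 1 (aT m)) (S P0) (N - S P0)) 1). rewrite Cmod_1 in H0.
    assert (1 / (1 - Ssum) <= 1 / (1 - sigmaT (INR P))).
    { unfold Rdiv. rewrite !Rmult_1_l. apply Rinv_le_contravar; lra. }
    lra.
Qed.

Lemma rp_bound P : 33 <= P -> sigmaT P <= 1 / (Rpower P (385/100) + 1).
Proof.
  intros HP.
  set (X := Rpower P (385/100)). set (Y := Rpower P (15/100)).
  assert (HX : 0 < X) by (unfold X, Rpower; apply exp_pos).
  assert (HY : 0 < Y) by (unfold Y, Rpower; apply exp_pos).
  assert (HXY : X * Y = P ^ 4).
  { unfold X, Y. rewrite <- Rpower_plus. replace (385/100 + 15/100) with (INR 4) by (simpl; lra).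
    apply Rpower_pow. lra. }
  assert (HY2 : 3/2 <= Y).
  { apply Rnot_lt_le. intros Hlt.
    assert (Y ^ 20 = P ^ 3).
    { rewrite <- (Rpower_pow 20 Y HY). unfold Y. rewrite Rpower_mult.
      replace (15/100 * INR 20) with (INR 3) by (simpl; lra). apply Rpower_pow. lra. }
    assert (Y ^ 20 <= (3/2) ^ 20) by (apply pow_incr; lra).
    assert (33 ^ 3 <= P ^ 3) by (apply pow_incr; lra).
    simpl in *. lra. }
  assert (X <= 2/3 * P^4) by nra.
  unfold sigmaT. apply div_le_div.
  apply Rmult_lt_0_compat; [apply Rmult_lt_0_compat; [apply Rmult_lt_0_compat|] |]; try lra. nra.
  lra.
  assert (P ^ 4 = P * P ^ 3) by ring. assert (33 ^ 3 <= P ^ 3) by (apply pow_incr; lra).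
  simpl in *. nra.
Qed.

Lemma final_ineqs P sig r : 33 <= P -> 0 <= sig -> sig <= 1 / (Rpower P (385/100) + 1) ->
  1 - sig <= r <= 1 / (1 - sig) ->
  / (1 + Rpower P (- (385 / 100))) <= r /\ r <= 1 + / Rpower P (385 / 100).
Proof.
  intros HP Hs Hsig [H1 H2].
  rewrite Rpower_Ropp. set (X := Rpower P (385/100)) in *.
  assert (HX : 0 < X) by (unfold X, Rpower; apply exp_pos).
  assert (1 / (X + 1) < 1) by (apply Rmult_lt_reg_r with (X+1); [lra| unfold Rdiv; rewrite Rmult_assoc, Rinv_l by lra; lra]).
  split.
  - replace (/ (1 + / X)) with (1 - 1 / (X + 1)) by (field; lra). lra.
  - eapply Rle_trans. apply H2. replace (1 + / X) with (1 / (1 - 1 / (X + 1))) by (field; lra).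
    unfold Rdiv. rewrite !Rmult_1_l. apply Rinv_le_contravar; lra.
Qed.

Lemma ppb_skip1 f K d : (forall m, (K <= m < K + d)%nat -> prime (Z.of_nat m) -> f m = RtoC 1) ->
  prod_primes_below f (K + d) = prod_primes_below f K.
Proof.
  intros H. induction d. rewrite Nat.add_0_r; auto.
  rewrite Nat.add_succ_r. simpl. rewrite IHd by (intros; apply H; auto; lia).
  destruct (prime_dec (Z.of_nat (K + d))) as [P|P]. rewrite H by (auto; lia). ring. ring.
Qed.

Lemma ppb_ext_below f g N : (forall m, (m < N)%nat -> f m = g m) ->
  prod_primes_below f N = prod_primes_below g N.
Proof.
  intros H. induction N; simpl; auto. rewrite IHN by (intros; apply H; lia). rewrite H by lia. auto.
Qed.

Theorem mainTheorem15 (pr : nat -> nat) (Hpr : consecutive_primes pr)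
  (q : nat) (chi : nat -> C) (Hchi : dirichlet_character q chi)
  (n : nat) (Hn : (31 <= n)%nat) :
  exists R1 : C,
    Bchi chi =
      Cmult (Cmult (Cmult (Cmult (Cmult R1 artinA) (Lfun 2 chi)) (Lfun 3 chi))
              (Lfun 4 chi))
        (prod_1_to (fun k => local_factor chi (pr k)) n) /\
    / (1 + Rpower (INR (pr (S n))) (- (385 / 100))) <= Cmod R1 /\
    Cmod R1 <= 1 + / Rpower (INR (pr (S n))) (385 / 100).
Proof.
  set (P0 := pr n). set (P := pr (S n)).
  assert (HP : 33 <= INR P).
  { pose proof (pr_ge pr Hpr (S n) ltac:(lia)). fold P in H.
    pose proof (le_INR 33 P ltac:(lia)). simpl in H0. lra. }
  assert (HP0 : (P0 < P)%nat) by (apply (pr_strict pr Hpr); lia).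
  assert (Hnext : forall m, prime (Z.of_nat m) -> (P0 < m)%nat -> (P <= m)%nat).
  { intros m Hm Hlt. apply (pr_next pr Hpr); auto. lia. }
  set (R1 := Clim (prod_primes_below (Tfac chi P0))).
  assert (cT : Ccvg (prod_primes_below (Tfac chi P0)) R1).
  { apply CCauchy_lim. apply ppb_cauchy with (Cc := 5/2). lra.
    intros m Hm. unfold Tfac. destruct (m <=? P0)%nat eqn:Em.
    - replace (Cminus 1 1) with (RtoC 0) by ring. rewrite Cmod_0.
      apply Rlt_le, Rdiv_lt_0_compat. lra. apply pow_lt. apply (lt_INR 0). pose proof (prime_ge_2 _ Hm). lia.
    - apply Nat.leb_gt in Em. pose proof (Hnext m Hm Em).
      assert (INR P <= INR m) by (apply le_INR; auto).
      eapply Rle_trans. eapply lf_bound; eauto. lra.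
      apply div_le_div. apply pow_lt; lra. apply pow_lt; lra.
      replace (INR m ^ 5) with (INR m ^ 2 * INR m ^ 3) by ring.
      assert (1 <= INR m ^ 3) by (apply pow_R1_Rle; lra).
      assert (0 < INR m ^ 2) by (apply pow_lt; lra). nra. }
  assert (cA : Ccvg (prod_primes_below Afac) artinA).
  { apply CCauchy_lim. apply ppb_cauchy with (Cc := 2). lra.
    intros m Hm. pose proof (prime_ge_2 _ Hm).
    assert (2 <= INR m) by (pose proof (le_INR 2 m ltac:(lia)) as HH; simpl in HH; lra).
    unfold Afac. rewrite <- RtoC_minus, Cmod_R.
    replace (1 - / (INR m * (INR m - 1)) - 1) with (- (1 / (INR m * (INR m - 1)))) by (field; split; lra).
    rewrite Rabs_Ropp, Rabs_pos_eq.
    apply div_le_div. nra. nra. nra.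
    apply Rlt_le, Rdiv_lt_0_compat. lra. nra. }
  pose proof (euler q chi 2 Hchi ltac:(lia)) as c2.
  pose proof (euler q chi 3 Hchi ltac:(lia)) as c3.
  pose proof (euler q chi 4 Hchi ltac:(lia)) as c4.
  set (Fn := prod_1_to (fun k => local_factor chi (pr k)) n).
  assert (HFn : forall N, (S P0 <= N)%nat ->
     prod_primes_below (Bfac chi) N =
     Cmult (Cmult (Cmult (Cmult (prod_primes_below Afac N) (prod_primes_below (Efac chi 2) N))
       (prod_primes_below (Efac chi 3) N)) (prod_primes_below (Efac chi 4) N))
       (Cmult Fn (prod_primes_below (Tfac chi P0) N))).
  { intros N HN.
    rewrite (ppb_ext _ (fun m => Cmult (Cmult (Cmult (Cmult (Afac m) (Efac chi 2 m)) (Efac chi 3 m)) (Efac chi 4 m))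
                 (Cmult (Hfac chi P0 m) (Tfac chi P0 m)))).
    2: { intros m Hm. rewrite (local_identity q) by auto. f_equal.
         unfold Hfac, Tfac. destruct (m <=? P0)%nat; ring. }
    rewrite !ppb_mult. f_equal. f_equal.
    unfold Fn. rewrite (prod_link pr) by (auto; lia). fold P0.
    replace N with (S P0 + (N - S P0))%nat by lia. rewrite ppb_skip1.
    apply ppb_ext_below. intros m Hm. unfold Hfac. replace (m <=? P0)%nat with true by (symmetry; apply Nat.leb_le; lia). auto.
    intros m Hm _. unfold Hfac. replace (m <=? P0)%nat with false by (symmetry; apply Nat.leb_gt; lia). auto. }
  exists R1. split.
  - change (Bchi chi) with (Clim (prod_primes_below (Bfac chi))).
    rewrite (Ccvg_Clim _ (Cmult (Cmult (Cmult (Cmult artinA (Lfun 2 chi)) (Lfun 3 chi)) (Lfun 4 chi)) (Cmult Fn R1))).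
    ring.
    apply Ccvg_ext with (N0 := S P0) (u := fun N =>
     Cmult (Cmult (Cmult (Cmult (prod_primes_below Afac N) (prod_primes_below (Efac chi 2) N))
       (prod_primes_below (Efac chi 3) N)) (prod_primes_below (Efac chi 4) N))
       (Cmult Fn (prod_primes_below (Tfac chi P0) N))).
    intros N HN. symmetry. apply HFn; auto.
    repeat apply Ccvg_mult; auto. apply Ccvg_const.
  - apply final_ineqs with (sig := sigmaT (INR P)). auto.
    unfold sigmaT. apply Rlt_le, Rdiv_lt_0_compat. lra.
    apply Rmult_lt_0_compat; [apply Rmult_lt_0_compat; [apply Rmult_lt_0_compat|] |]; try lra. nra.
    apply rp_bound; auto.
    apply (Ccvg_mod_bounds (prod_primes_below (Tfac chi P0)) R1 _ _ (S P0)); auto.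
    intros N HN. eapply T_bounds; eauto.
Qed.
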